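(* Let $A, B, C, F \in \mathbb{R}^{n\times n}$ with $B$ and $C$ invertible, and suppose $\sigma_{\min}(B^{-1}AC^{-1}) > 1$. Then the matrix equation $$AX + B\lvert CX\rvert = F$$ has exactly one solution $X \in \mathbb{R}^{n\times n}$.
   Context: $\sigma_{\min}(\cdot)$ is the smallest singular value and $\lvert M\rvert$ the entrywise absolute value of a matrix $M$. *)

(* Defs.v *)
From HB Require Import structures.
From mathcomp Require Import all_boot all_order all_algebra.
From mathcomp Require Import boolp classical_sets reals.
Set Implicit Arguments. Unset Strict Implicit. Unset Printing Implicit Defensive.
Import Order.TTheory GRing.Theory Num.Theory.
Local Open Scope ring_scope.
Local Open Scope classical_set_scope.

Definition sigma_min (R : realType) (n : nat) (M : 'M[R]_n) : R :=
  Num.sqrt (inf [set a : R | eigenvalue (M^T *m M) a]).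

Definition mx_abs (R : realType) (m n : nat) (M : 'M[R]_(m, n)) : 'M[R]_(m, n) :=
  map_mx (fun x => `|x|) M.

(* Main.v *)
Require Import Defs.
From HB Require Import structures.
From mathcomp Require Import all_boot all_order all_algebra.
From mathcomp Require Import boolp classical_sets reals.
From mathcomp Require Import functions interval_inference topology normedtype sequences.
From mathcomp Require Import ring lra.
Import Order.TTheory GRing.Theory Num.Theory.
Local Open Scope ring_scope.

Definition MT (R : realType) n := 'M[R]_n.
HB.instance Definition _ (R : realType) n := NormedModule.on (MT R n).
HB.instance Definition _ (R : realType) (n : nat) := Uniform_isComplete.Build (MT R n) cauchy_cvg.

Section Dot.
Variables (R : realType) (n : nat).
Implicit Types (Y Z W N T : 'M[R]_n).

Definition dot Y Z : R := \tr (Y^T *m Z).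

Lemma dotE Y Z : dot Y Z = \sum_i \sum_k Y k i * Z k i.
Proof.
rewrite /dot /mxtrace; apply: eq_bigr => i _; rewrite mxE.
by apply: eq_bigr => k _; rewrite mxE.
Qed.

Lemma dotC Y Z : dot Y Z = dot Z Y.
Proof.
by rewrite !dotE; apply: eq_bigr => i _; apply: eq_bigr => k _; rewrite mulrC.
Qed.

Lemma dotDr Y Z W : dot Y (Z + W) = dot Y Z + dot Y W.
Proof. by rewrite /dot mulmxDr mxtraceD. Qed.

Lemma dotBr Y Z W : dot Y (Z - W) = dot Y Z - dot Y W.
Proof. by rewrite /dot mulmxBr raddfB. Qed.

Lemma dotZr Y a Z : dot Y (a *: Z) = a * dot Y Z.
Proof. by rewrite /dot -scalemxAr mxtraceZ. Qed.

Lemma dotDl Y Z W : dot (Z + W) Y = dot Z Y + dot W Y.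
Proof. by rewrite dotC dotDr dotC (dotC Y). Qed.

Lemma dotBl Y Z W : dot (Z - W) Y = dot Z Y - dot W Y.
Proof. by rewrite dotC dotBr dotC (dotC Y). Qed.

Lemma dotZl Y a Z : dot (a *: Z) Y = a * dot Z Y.
Proof. by rewrite dotC dotZr dotC. Qed.

Lemma dot_mull N Y Z : dot (N *m Y) Z = dot Y (N^T *m Z).
Proof. by rewrite /dot trmx_mul mulmxA. Qed.

Lemma dot_ge0 Y : 0 <= dot Y Y.
Proof.
rewrite dotE; apply: sumr_ge0 => i _; apply: sumr_ge0 => k _.
by rewrite -expr2 sqr_ge0.
Qed.

Lemma dot_eq0 Y : dot Y Y = 0 -> Y = 0.
Proof.
have h0 : forall (a : R), 0 <= a * a by move=> a; rewrite -expr2 sqr_ge0.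
rewrite dotE => /psumr_eq0P H; apply/matrixP => k i; rewrite mxE.
have /psumr_eq0P H2 := H (fun i _ => sumr_ge0 _ (fun k _ => h0 _)) i isT.
have := H2 (fun k _ => h0 _) k isT.
by move/eqP; rewrite mulf_eq0 orbb => /eqP.
Qed.

Lemma entry_le Y i j : Y i j ^+ 2 <= dot Y Y.
Proof.
have h0 : forall (a : R), 0 <= a * a by move=> a; rewrite -expr2 sqr_ge0.
rewrite dotE (bigD1 j) //= (bigD1 i) //= -addrA expr2 lerDl.
apply: addr_ge0; apply: sumr_ge0 => *; first exact: h0.
by apply: sumr_ge0 => *; exact: h0.
Qed.

Lemma dot_abs Y Z : dot (map_mx (fun x => `|x|) Y - map_mx (fun x => `|x|) Z)
   (map_mx (fun x => `|x|) Y - map_mx (fun x => `|x|) Z) <= dot (Y - Z) (Y - Z).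
Proof.
rewrite !dotE; apply: ler_sum => i _; apply: ler_sum => k _; rewrite !mxE.
set a := Y k i; set b := Z k i.
have h1 : a * b <= `|a| * `|b| by rewrite -normrM ler_norm.
have h2 : `|a| * `|a| = a * a by rewrite -normrM ger0_norm // -expr2 sqr_ge0.
have h3 : `|b| * `|b| = b * b by rewrite -normrM ger0_norm // -expr2 sqr_ge0.
nra.
Qed.

Lemma sq_sum_le m (a : 'I_m -> R) : (\sum_k a k) ^+ 2 <= m%:R * \sum_k a k ^+ 2.
Proof.
elim: m a => [|m IH] a; first by rewrite !big_ord0 expr0n /= mul0r.
rewrite !big_ord_recr /=.
set s := \sum_(i < m) a (widen_ord (leqnSn m) i).
set S2 := \sum_(i < m) a (widen_ord (leqnSn m) i) ^+ 2.
have H := IH (fun i => a (widen_ord (leqnSn m) i)).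
rewrite -/s -/S2 in H.
set x := a ord_max.
have hS : 0 <= S2 by apply: sumr_ge0 => *; exact: sqr_ge0.
have hm : 0 <= m%:R :> R by [].
rewrite -natr1.
have h4 : 0 <= (m%:R * x - s) ^+ 2 by exact: sqr_ge0.
have [m0|mpos] := eqVneq m 0%N.
  move: H; rewrite m0 mul0r => H.
  have s0 : s = 0 by apply/eqP; rewrite -sqrf_eq0 eq_le H sqr_ge0.
  rewrite s0 add0r; nra.
have mp : 0 < m%:R :> R by rewrite ltr0n lt0n.
nra.
Qed.

Lemma opbound N : exists K, 0 < K /\ forall Y, dot (N *m Y) (N *m Y) <= K * dot Y Y.
Proof.
set c := dot N N.
have c0 : 0 <= c by exact: dot_ge0.
exists (n%:R * n%:R * c + 1); split.
  by rewrite ltr_pwDr // !mulr_ge0.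
move=> Y.
have hY := dot_ge0 Y.
apply: (@le_trans _ _ (n%:R * n%:R * c * dot Y Y)); last first.
  by rewrite ler_wpM2r // lerDl.
have step : forall i k, (N *m Y) k i * (N *m Y) k i <= n%:R * c * \sum_l Y l i * Y l i.
  move=> i k; rewrite -expr2 mxE.
  apply: (le_trans (sq_sum_le _ (fun l => N k l * Y l i))).
  rewrite -mulrA ler_wpM2l // mulr_sumr; apply: ler_sum => l _.
  rewrite exprMn -expr2; apply: ler_wpM2r; first exact: sqr_ge0.
  exact: entry_le.
rewrite dotE (dotE Y).
rewrite mulr_sumr; apply: ler_sum => i _.
apply: le_trans (ler_sum _ (fun k _ => step i k)) _.
rewrite sumr_const card_ord -mulr_natl le_eqVlt; apply/orP; left; apply/eqP; ring.
Qed.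

Lemma quad_lemma (a b c : R) : 0 <= c ->
  (forall t, 0 <= a + 2 * t * b + t ^+ 2 * c) -> b ^+ 2 <= a * c.
Proof.
move=> c0 H.
have [cz|cp] := eqVneq c 0.
  rewrite cz mulr0.
  have [bz|bn] := eqVneq b 0; first by rewrite bz expr0n.
  have := H (- (a + 1) / (2 * b)).
  have -> : 2 * (- (a + 1) / (2 * b)) * b = - (a + 1).
    by field.
  rewrite cz mulr0 addr0; lra.
have cpos : 0 < c by rewrite lt_neqAle eq_sym cp c0.
have := H (- b / c).
have hu : c * (- b / c) = - b by field.
set u := - b / c in hu *.
nra.
Qed.

Lemma psd_cs T : T^T = T -> (forall Y, 0 <= dot Y (T *m Y)) ->
  forall Y Z, dot Y (T *m Z) ^+ 2 <= dot Y (T *m Y) * dot Z (T *m Z).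
Proof.
move=> Ts Tp Y Z; apply: quad_lemma; first exact: Tp.
move=> t; have := Tp (Y + t *: Z).
rewrite mulmxDr -scalemxAr dotDr !dotDl !dotZr !dotZl.
have -> : dot Z (T *m Y) = dot Y (T *m Z).
  by rewrite dotC dot_mull Ts.
move=> h; apply: le_trans h _; rewrite le_eqVlt; apply/orP; left; apply/eqP.
by rewrite expr2; ring.
Qed.


Lemma dot0l Y : dot 0 Y = 0.
Proof. by rewrite -(scale0r (0 : 'M[R]_n)) dotZl mul0r. Qed.

Definition colrep (v : 'rV[R]_n) : 'M[R]_n := \matrix_(i, j) v 0 i.

Lemma colrep_mul N v : N *m colrep v = colrep (v *m N^T).
Proof.
apply/matrixP => i j; rewrite !mxE; apply: eq_bigr => k _.
by rewrite !mxE mulrC.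
Qed.

Lemma colrepZ a v : colrep (a *: v) = a *: colrep v.
Proof. by apply/matrixP => i j; rewrite !mxE. Qed.

Lemma colrep_eq0 v : colrep v = 0 -> v = 0.
Proof.
move=> H; apply/matrixP => a i; rewrite ord1.
by have := congr1 (fun A : 'M[R]_n => A i i) H; rewrite !mxE.
Qed.

Section Spec.
Variable M : 'M[R]_n.
Hypothesis n_gt0 : (0 < n)%N.

Let S := M^T *m M.

Lemma S_sym : S^T = S.
Proof. by rewrite /S trmx_mul trmxK. Qed.

Lemma qS Y : dot Y (S *m Y) = dot (M *m Y) (M *m Y).
Proof. by rewrite dot_mull mulmxA. Qed.

Let Ray := [set r : R | exists2 Y : 'M[R]_n, Y != 0 & r = dot Y (S *m Y) / dot Y Y]%classic.
Let mu := inf Ray.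

Lemma dot_gt0 Y : Y != 0 -> 0 < dot Y Y.
Proof.
move=> Y0; rewrite lt_neqAle dot_ge0 andbT eq_sym.
by apply/eqP => /dot_eq0 /eqP; apply/negP.
Qed.

Lemma Ray_inf : has_inf Ray.
Proof.
split.
  exists (dot 1%:M (S *m 1%:M) / dot 1%:M 1%:M), 1%:M => //.
  apply/negP => /eqP/matrixP/(_ (Ordinal n_gt0) (Ordinal n_gt0)).
  by rewrite !mxE eqxx /= => /eqP; rewrite oner_eq0.
exists 0 => r [Y Y0 ->]; rewrite divr_ge0 // ?dot_ge0 // qS dot_ge0 //.
Qed.

Lemma mu_lb Y : mu * dot Y Y <= dot Y (S *m Y).
Proof.
have [->|Y0] := eqVneq Y 0; first by rewrite !dot0l mulr0.
rewrite -ler_pdivlMr; last exact: dot_gt0.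
apply: (ge_inf Ray_inf.2); by exists Y.
Qed.

Lemma mu_adh e : 0 < e -> exists2 Y, Y != 0 & dot Y (S *m Y) < (mu + e) * dot Y Y.
Proof.
move=> e0; have [r [Y Y0 ->] hr] := inf_adherent e0 Ray_inf.
by exists Y => //; rewrite -ltr_pdivrMr // dot_gt0.
Qed.

Let T := S - mu%:M.

Lemma qT Y : dot Y (T *m Y) = dot Y (S *m Y) - mu * dot Y Y.
Proof. by rewrite /T mulmxBl dotBr mul_scalar_mx dotZr. Qed.

Lemma T_sym : T^T = T.
Proof. by rewrite /T linearB /= S_sym tr_scalar_mx. Qed.

Lemma T_psd Y : 0 <= dot Y (T *m Y).
Proof. by rewrite qT subr_ge0 mu_lb. Qed.

Lemma T_not_unit : T \notin unitmx.
Proof.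
apply/negP => Tu.
have [K2 [K2p HK2]] := opbound (invmx T).
have [K1 [K1p HK1]] := opbound T.
set K3 := 1 + K1.
have HK3 : forall Z, dot Z (T *m Z) <= K3 * dot Z Z.
  move=> Z; have h := dot_ge0 (Z - T *m Z).
  rewrite !dotBl !dotBr (dotC (T *m Z) Z) in h.
  have := HK1 Z; have := dot_ge0 Z; rewrite /K3; nra.
have K3p : 0 < K3 by rewrite /K3; lra.
have ep : 0 < (K2 * K3)^-1 by rewrite invr_gt0 mulr_gt0.
have [Y Y0 HY] := mu_adh _ ep.
have hq : dot Y (T *m Y) < (K2 * K3)^-1 * dot Y Y.
  by rewrite qT; move: HY; rewrite mulrDl; lra.
set w := dot (T *m Y) (T *m Y).
have hw : dot Y (T *m (T *m Y)) = w by rewrite /w dot_mull T_sym.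
have cs := psd_cs _ T_sym T_psd Y (T *m Y).
rewrite hw in cs.
have h3 := HK3 (T *m Y).
have hq0 := T_psd Y.
have hw0 : 0 <= w by exact: dot_ge0.
have hwle : w <= K3 * dot Y (T *m Y).
  have h4 : w ^+ 2 <= dot Y (T *m Y) * (K3 * w).
    apply: le_trans cs _; apply: ler_wpM2l => //.
  rewrite leNgt; apply/negP => hc.
  have wpos : 0 < w by apply: le_lt_trans hc; rewrite mulr_ge0 // ltW.
  have := hc; rewrite -(ltr_pM2r wpos) => hc2.
  move: h4; rewrite expr2; nra.
have hYY : dot Y Y <= K2 * w.
  by have := HK2 (T *m Y); rewrite mulKmx.
have hYp := dot_gt0 _ Y0.
have : dot Y Y < dot Y Y.
  apply: (le_lt_trans hYY).
  apply: (le_lt_trans (ler_wpM2l (ltW K2p) hwle)).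
  have -> : dot Y Y = K2 * (K3 * ((K2 * K3)^-1 * dot Y Y)).
    by field; rewrite !gt_eqF.
  by rewrite ltr_pM2l // ltr_pM2l.
by rewrite ltxx.
Qed.

Lemma mu_eigen : eigenvalue S mu.
Proof.
have := T_not_unit; rewrite unitmxE unitfE negbK => /det0P [v v0 hv].
apply/eigenvalueP; exists v => //.
by apply/eqP; rewrite -subr_eq0 -mul_mx_scalar -mulmxBr hv.
Qed.

Lemma eig_ge0 a : eigenvalue S a -> 0 <= a.
Proof.
move=> /eigenvalueP [v hv v0].
have Y0 : colrep v != 0 by apply/negP => /eqP /colrep_eq0 /eqP; apply/negP.
have hS : S *m colrep v = a *: colrep v by rewrite colrep_mul S_sym hv colrepZ.
have := qS (colrep v); rewrite hS dotZr => h.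
have := dot_ge0 (M *m colrep v); rewrite -h => h2.
have := dot_gt0 _ Y0; nra.
Qed.

Lemma key : 1 < Num.sqrt (inf [set a : R | eigenvalue (M^T *m M) a]%classic) ->
  exists mu, 1 < mu /\ forall Y, mu * dot Y Y <= dot (M *m Y) (M *m Y).
Proof.
set E := [set a : R | eigenvalue (M^T *m M) a]%classic.
move=> h1.
have hE : 1 < inf E.
  have [x0|xn] := leP 0 (inf E).
    have := sqr_sqrtr x0; move: h1; set s := Num.sqrt _; nra.
  have : Num.sqrt (inf E) == 0 by rewrite sqrtr_eq0 ltW.
  by move/eqP => h; rewrite h ltr10 in h1.
have hlb : has_lbound E by exists 0 => a; exact: eig_ge0.
have : inf E <= mu by apply: (ge_inf hlb); exact: mu_eigen.
move=> hmu; exists mu; split; first exact: lt_le_trans hmu.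
by move=> Y; rewrite -qS mu_lb.
Qed.

End Spec.


Definition mnorm (x : 'M[R]_n) : R := `|x : MT R n|.

Lemma mnorm_entry (x : 'M[R]_n) i j : `|x i j| <= mnorm x.
Proof.
have -> : mnorm x = \big[Num.max/0]_ij `|x ij.1 ij.2| by exact: mx_normrE.
exact: (le_bigmax 0 (fun ij : 'I_n * 'I_n => `|x ij.1 ij.2|) (i, j)).
Qed.

Lemma mnorm_ge0 (x : 'M[R]_n) : 0 <= mnorm x.
Proof. exact: normr_ge0. Qed.

Lemma mnorm_sq_le (x : 'M[R]_n) : mnorm x ^+ 2 <= dot x x.
Proof.
have e : mnorm x = mx_norm x by [].
have [x0|xn] := eqVneq (mx_norm x) 0.
  by rewrite e x0 expr0n /= dot_ge0.
have [[i j] hij] := mx_norm_neq0 xn.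
by rewrite e hij /= real_normK ?num_real // entry_le.
Qed.

Lemma dot_le_mnorm (x : 'M[R]_n) : dot x x <= n%:R * n%:R * mnorm x ^+ 2.
Proof.
rewrite dotE.
apply: (@le_trans _ _ (\sum_(i < n) \sum_(k < n) mnorm x ^+ 2)).
  apply: ler_sum => i _; apply: ler_sum => k _.
  rewrite -expr2 -real_normK ?num_real //.
  have h := mnorm_entry x k i; have h0 := normr_ge0 (x k i).
  by rewrite lerXn2r // ?nnegrE // mnorm_ge0.
by rewrite !sumr_const !card_ord -mulrnA -natrM mulr_natl.
Qed.

Section Fix.
Variables (M G : 'M[R]_n) (mu : R).
Hypotheses (mu1 : 1 < mu) (HM : forall Y, mu * dot Y Y <= dot (M *m Y) (M *m Y)).
Hypothesis n_gt0 : (0 < n)%N.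

Let abs (Y : 'M[R]_n) := map_mx (fun x : R => `|x|) Y.

Lemma mu_gt0 : 0 < mu. Proof. by apply: lt_trans mu1. Qed.

Lemma M_unit : M \in unitmx.
Proof.
apply/negPn/negP; rewrite unitmxE unitfE negbK -det_tr => /det0P [v v0 hv].
have h := HM (colrep v); rewrite colrep_mul hv in h.
have c0 : colrep (0 : 'rV[R]_n) = 0 by apply/matrixP => i j; rewrite !mxE.
rewrite c0 dot0l in h.
have Y0 : colrep v != 0 by apply/negP => /eqP /colrep_eq0 /eqP; apply/negP.
have := dot_gt0 _ Y0; have := mu_gt0; nra.
Qed.

Let N := invmx M.

Lemma HN W : mu * dot (N *m W) (N *m W) <= dot W W.
Proof. by have := HM (N *m W); rewrite mulKVmx // M_unit. Qed.

Let q := mu^-1.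
Let P (Y : 'M[R]_n) := N *m (G - abs Y).

Lemma q_ge0 : 0 <= q. Proof. by rewrite /q invr_ge0 ltW // mu_gt0. Qed.

Lemma dot_swap Y Z : dot (Z - Y) (Z - Y) = dot (Y - Z) (Y - Z).
Proof.
have -> : Z - Y = (-1) *: (Y - Z) by rewrite scaleN1r opprB.
by rewrite dotZl dotZr mulrA mulrNN !mul1r.
Qed.

Lemma P_lip Y Z : dot (P Y - P Z) (P Y - P Z) <= q * dot (Y - Z) (Y - Z).
Proof.
rewrite /P -mulmxBr.
have -> : (G - abs Y) - (G - abs Z) = abs Z - abs Y.
  by rewrite opprB addrC addrA subrK.
rewrite /q ler_pdivlMl ?mu_gt0 //.
apply: le_trans (HN _) _.
by rewrite -dot_swap; exact: dot_abs.
Qed.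

Lemma iter_lip k Y Z : dot (iter k P Y - iter k P Z) (iter k P Y - iter k P Z)
   <= q ^+ k * dot (Y - Z) (Y - Z).
Proof.
elim: k => [|k IH]; first by rewrite expr0 mul1r.
rewrite !iterS; apply: le_trans (P_lip _ _) _.
by rewrite exprS -mulrA ler_wpM2l // q_ge0.
Qed.

Lemma bern k : 1 + k%:R * (mu - 1) <= mu ^+ k.
Proof.
elim: k => [|k IH]; first by rewrite mul0r addr0 expr0.
rewrite exprS -natr1.
have h : 0 <= k%:R :> R by [].
have h1 := ler_wpM2l (ltW mu_gt0) IH.
have h2 : 0 <= k%:R * (mu - 1) * (mu - 1) by rewrite mulr_ge0 // ?mulr_ge0 // subr_ge0 ltW.
have := mu1; nra.
Qed.

Lemma exists_k : exists k, q ^+ k * (n%:R * n%:R) <= 4^-1.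
Proof.
set c := 4 * (n%:R * n%:R) : R.
set k := (Num.trunc (c / (mu - 1))).+1.
exists k.
have hk := truncnS_gt (c / (mu - 1)).
have m1 : 0 < mu - 1 by rewrite subr_gt0.
have hk2 : c < k%:R * (mu - 1) by rewrite -ltr_pdivrMr.
have hb := bern k.
have hmk : 0 < mu ^+ k by rewrite exprn_gt0 // mu_gt0.
rewrite /q exprVn ler_pdivrMl //.
rewrite /c in hk2; lra.
Qed.


Lemma contr k : q ^+ k * (n%:R * n%:R) <= 4^-1 ->
  forall Y Z, mnorm (iter k P Y - iter k P Z) <= 2^-1 * mnorm (Y - Z).
Proof.
move=> hk Y Z.
set a := mnorm _; set b := mnorm (Y - Z).
have h1 := mnorm_sq_le (iter k P Y - iter k P Z); rewrite -/a in h1.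
have h2 := iter_lip k Y Z.
have h3 := dot_le_mnorm (Y - Z); rewrite -/b in h3.
have hq : 0 <= q ^+ k by rewrite exprn_ge0 // q_ge0.
have h4 := ler_wpM2l hq h3.
have ha : 0 <= a by exact: mnorm_ge0.
have hb : 0 <= b by exact: mnorm_ge0.
have hb2 : 0 <= b ^+ 2 by exact: sqr_ge0.
have h5 := ler_wpM2r hb2 hk.
have : a ^+ 2 <= 4^-1 * b ^+ 2.
  apply: (le_trans h1); apply: (le_trans h2); apply: (le_trans h4).
  by rewrite mulrA.
move=> h6; rewrite leNgt; apply/negP => h7.
have h8 : 2^-1 * b * (2^-1 * b) < a * a.
  by apply: ltr_pM => //; rewrite mulr_ge0 // invr_ge0.
move: h6 h8; rewrite !expr2; lra.
Qed.

Lemma exists_fix : exists Y, M *m Y + abs Y = G.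
Proof.
have [k hk] := exists_k.
pose f := fun Y : MT R n => iter k P Y.
have ctr : is_contraction (totalfun f : {fun [set: MT R n] >-> [set: MT R n]}).
  exists (2^-1 : R)%:nng; split; first by rewrite /=; lra.
  move=> [x y] _ /=; exact: contr.
have [Z _ hZ] := banach_fixed_point ctr closedT (ex_intro _ 0 I).
have hZ' : Z = iter k P Z by exact: hZ.
have hPZ : P Z = iter k P (P Z) by rewrite -iterSr iterS -hZ'.
have hd := iter_lip k (P Z) Z.
rewrite -hPZ -hZ' in hd.
have hq : q ^+ k <= 4^-1.
  apply: le_trans hk; rewrite ler_peMr ?exprn_ge0 ?q_ge0 //.
  by rewrite -natrM ler1n muln_gt0 n_gt0.
have hd0 := dot_ge0 (P Z - Z).
have hq0 : 0 <= q ^+ k by rewrite exprn_ge0 // q_ge0.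
have : dot (P Z - Z) (P Z - Z) = 0.
  apply/eqP; rewrite eq_le hd0 andbT.
  have := ler_wpM2r hd0 hq; lra.
move/dot_eq0/eqP; rewrite subr_eq0 => /eqP hfix.
exists Z; rewrite -{1}hfix /P mulKVmx ?M_unit //.
by rewrite subrK.
Qed.

Lemma uniq_fix Y Z : M *m Y + abs Y = G -> M *m Z + abs Z = G -> Y = Z.
Proof.
move=> hY hZ.
have e : M *m (Y - Z) = abs Z - abs Y.
  have mY : M *m Y = G - abs Y by rewrite -hY addrK.
  have mZ : M *m Z = G - abs Z by rewrite -hZ addrK.
  by rewrite mulmxBr mY mZ opprB addrC addrA subrK.
have h := HM (Y - Z); rewrite e in h.
have h2 := dot_abs Z Y; rewrite dot_swap in h2.
have h0 := dot_ge0 (Y - Z).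
have : dot (Y - Z) (Y - Z) = 0.
  apply/eqP; rewrite eq_le h0 andbT.
  have := le_trans h h2; have := mu1; nra.
by move/dot_eq0/eqP; rewrite subr_eq0 => /eqP.
Qed.

End Fix.

End Dot.

Theorem corollary4p1 (R : realType) (n : nat) (A B C F : 'M[R]_n) :
  B \in unitmx -> C \in unitmx ->
  1 < sigma_min (invmx B *m A *m invmx C) ->
  exists! X : 'M[R]_n, A *m X + B *m mx_abs (C *m X) = F.
Proof.
case: n A B C F => [|n'] A B C F Bu Cu hs.
  exists 0; split; first by apply/matrixP => -[].
  by move=> X' _; apply/matrixP => -[].
set M := invmx B *m A *m invmx C.
set G := invmx B *m F.
have [mu [mu1 HM]] := @key R n'.+1 M isT hs.
have idt : forall X : 'M[R]_n'.+1, M *m (C *m X) + map_mx (fun x : R => `|x|) (C *m X)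
    = invmx B *m (A *m X + B *m mx_abs (C *m X)).
  by move=> X; rewrite /M /mx_abs mulmxDr -!mulmxA !mulKmx.
have Biu : invmx B \in unitmx by rewrite unitmx_inv.
have eqv : forall X : 'M[R]_n'.+1, (A *m X + B *m mx_abs (C *m X) = F) <->
    (M *m (C *m X) + map_mx (fun x : R => `|x|) (C *m X) = G).
  move=> X; split; first by move=> h; rewrite idt h.
  by rewrite idt => h; apply: (can_inj (mulKmx Biu)).
have [Y hY] := @exists_fix R n'.+1 M G mu mu1 HM isT.
exists (invmx C *m Y); split.
  by apply/eqv; rewrite mulKVmx.
move=> X' /eqv h'.
apply: (can_inj (mulKmx Cu)); rewrite mulKVmx //.
exact: (@uniq_fix R n'.+1 M G mu mu1 HM).
Qed.
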